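(* Every search game (as defined in the context) with solitary-search dominant payoffs admits a pure Nash equilibrium that is location-maximizing.
   Context: A search game $G=(N,\Omega,\Pi,\mu,K,c,v)$ consists of: a finite set of players $N=\{1,\ldots,n\}$; a finite set $\Omega$ of locations; for each player $i$ a partition $\Pi_i$ of $\Omega$, with $\pi_i(\omega)$ the cell containing $\omega$; a common prior $\mu\in\Delta(\Omega)$ with $\mu(\pi_i)>0$ for every cell of every player, and $\mu(\omega|\pi_i)=\mu(\omega)/\mu(\pi_i)$ for $\omega\in\pi_i$; capacities $K_i\in\mathbb{N}$; costs $c_i:\{0,\ldots,K_i\}\to\mathbb{R}_{\ge0}$ with $c_i(0)=0$ and nondecreasing increments $c_i(k+1)-c_i(k)\ge c_i(k)-c_i(k-1)$; rewards $v_i^m(\omega)\ge0$ with $v_i^{m+1}(\omega)\le v_i^m(\omega)$; social values $v_{\mathfrak{s}}(\omega)\ge0$. A pure strategy $s_i$ assigns to each cell $\pi_i$ a subset $s_i(\pi_i)\subseteq\pi_i$ of size at most $K_i$; $S$ is the set of pure profiles. With $m_s(\omega)=\sum_{i}\mathbf{1}_{\omega\in s_i(\pi_i(\omega))}$, player $i$'s payoff is $u_i(s)=\sum_{\omega}\mu(\omega)\big[\mathbf{1}_{\omega\in s_i(\pi_i(\omega))}v_i^{m_s(\omega)}(\omega)-c_i(|s_i(\pi_i(\omega))|)\big]$; a pure Nash equilibrium is a pure profile from which no player gains by a unilateral deviation to another pure strategy. A pure profile $s$ is location-maximizing if $\sum_{\omega\in\Omega}\mathbf{1}_{m_s(\omega)\ge1}\ge\sum_{\omega\in\Omega}\mathbf{1}_{m_{s'}(\omega)\ge1}$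 for every $s'\in S$. Payoffs are solitary-search dominant if for every player $i$, every cell $\pi_i\in\Pi_i$ and all $\omega,\omega'\in\pi_i$: $\mu(\omega|\pi_i)v_i^1(\omega)\ge\mu(\omega'|\pi_i)v_i^2(\omega')$ and $\mu(\omega|\pi_i)v_i^1(\omega)\ge c_i(K_i)-c_i(K_i-1)$. *)

(* Defs.v *)
From HB Require Import structures.
From mathcomp Require Import all_boot all_order all_algebra.
From mathcomp Require Import reals.
Set Implicit Arguments. Unset Strict Implicit. Unset Printing Implicit Defensive.
Import Order.TTheory GRing.Theory Num.Theory.
Local Open Scope ring_scope.

(* Rewards v i m w are meaningful for m >= 1. *)
Record search_game (R : realType) (n : nat) (Omega : finType) := SearchGame {
  Pi : 'I_n -> {set {set Omega}};
  mu : Omega -> R;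
  K : 'I_n -> nat;
  c : 'I_n -> nat -> R;
  v : 'I_n -> nat -> Omega -> R;
  vs : Omega -> R; (* social values (not used by the statement) *)
  Pi_partition : forall i, partition (Pi i) [set: Omega];
  mu_ge0 : forall w, 0 <= mu w;
  mu_sum1 : \sum_(w : Omega) mu w = 1;
  mu_cell_gt0 : forall i C, C \in Pi i -> 0 < \sum_(w in C) mu w;
  c_ge0 : forall i k, (k <= K i)%N -> 0 <= c i k;
  c_0 : forall i, c i 0%N = 0;
  c_convex : forall i k, (0 < k)%N -> (k < K i)%N ->
    c i k - c i k.-1 <= c i k.+1 - c i k;
  v_ge0 : forall i m w, (0 < m)%N -> 0 <= v i m w;
  v_decr : forall i m w, (0 < m)%N -> v i m.+1 w <= v i m w;
  vs_ge0 : forall w, 0 <= vs w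
}.

Section SearchGameDefs.
Variables (R : realType) (n : nat) (Omega : finType) (G : search_game R n Omega).

Definition cell (i : 'I_n) (w : Omega) : {set Omega} := pblock (Pi G i) w.

Definition mu_set (C : {set Omega}) : R := \sum_(w in C) mu G w.

Definition mu_cond (w : Omega) (C : {set Omega}) : R := mu G w / mu_set C.

(* A pure strategy of player i: assigns to each cell a subset of it of size
   at most K_i (values on non-cells are irrelevant). *)
Definition strategy := {set Omega} -> {set Omega}.
Definition profile := 'I_n -> strategy.

Definition is_strategy (i : 'I_n) (si : strategy) : Prop :=
  forall C, C \in Pi G i -> si C \subset C /\ (#|si C| <= K G i)%N.

Definition is_profile (s : profile) : Prop := forall i, is_strategy i (s i).

Definition searches (s : profile) (i : 'I_n) (w : Omega) : bool :=
  w \in s i (cell i w).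

Definition msearch (s : profile) (w : Omega) : nat :=
  (\sum_(j < n) searches s j w)%N.

Definition payoff (i : 'I_n) (s : profile) : R :=
  \sum_(w : Omega) mu G w *
    ((searches s i w)%:R * v G i (msearch s w) w - c G i #|s i (cell i w)|).

Definition deviate (s : profile) (i : 'I_n) (t : strategy) : profile :=
  fun j => if j == i then t else s j.

Definition pure_nash (s : profile) : Prop :=
  is_profile s /\
  forall i t, is_strategy i t -> payoff i (deviate s i t) <= payoff i s.

Definition nsearched (s : profile) : nat := #|[set w | (0 < msearch s w)%N]|.

Definition location_maximizing (s : profile) : Prop :=
  is_profile s /\ forall s', is_profile s' -> (nsearched s' <= nsearched s)%N.

Definition solitary_search_dominant : Prop :=
  forall i C, C \in Pi G i -> forall w w', w \in C -> w' \in C ->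
    mu_cond w' C * v G i 2%N w' <= mu_cond w C * v G i 1%N w /\
    c G i (K G i) - c G i (K G i).-1 <= mu_cond w C * v G i 1%N w.

End SearchGameDefs.

(* Main.v *)
Require Import Defs.
From HB Require Import structures.
From mathcomp Require Import all_boot all_order all_algebra.
From mathcomp Require Import reals.
From mathcomp Require Import zify lra.
Set Implicit Arguments. Unset Strict Implicit. Unset Printing Implicit Defensive.

Section ArgMax.
Variables (T : finType) (V : Type) (le : V -> V -> bool).
Hypothesis le_trans : forall u v w, le u v -> le v w -> le u w.
Hypothesis le_total : forall u v, le u v || le v u.

Lemma seq_max (F : T -> V) (s : seq T) : s != [::] ->
  exists2 y, y \in s & forall z, z \in s -> le (F z) (F y).
Proof.
elim: s => [//|x s IH] _.
case: s IH => [|x' s] IH.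
  exists x; first by rewrite inE.
  move=> z; rewrite inE => /eqP ->; by case/orP: (le_total (F x) (F x)).
have [y ys Hy] := IH isT.
case/orP: (le_total (F x) (F y)) => H.
  exists y; first by rewrite inE ys orbT.
  by move=> z; rewrite inE => /orP [/eqP ->|]; [|apply: Hy].
exists x; first by rewrite inE eqxx.
move=> z; rewrite inE => /orP [/eqP ->|zs].
  by case/orP: (le_total (F x) (F x)).
exact: le_trans (Hy _ zs) H.
Qed.

Lemma set_max (F : T -> V) (S : {set T}) : S != set0 ->
  exists2 y, y \in S & forall z, z \in S -> le (F z) (F y).
Proof.
move=> SN.
have : enum S != [::].
  apply: contraNneq SN => Hs; apply/eqP/setP => z; rewrite inE -mem_enum Hs //.
move/(seq_max F) => [y ys Hy]; exists y; first by rewrite -mem_enum.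
by move=> z zS; apply: Hy; rewrite mem_enum.
Qed.
End ArgMax.

Section Abstract.
Variables (A X : finType) (V : Type) (le : V -> V -> bool).
Hypothesis le_trans : forall u v w, le u v -> le v w -> le u w.
Hypothesis le_total : forall u v, le u v || le v u.
Variable E : A -> {set X}.
Variable f : A -> X -> nat -> V.
Hypothesis f_mono : forall a x m, le (f a x m.+1) (f a x m).
Variable P : pred X.
Hypothesis f_solo : forall a x y m, P x -> (~~ P y) || (1 < m) -> ~~ le (f a x 1) (f a y m).

Lemma le_refl_abs u : le u u.
Proof. by case/orP: (le_total u u). Qed.

Lemma f_anti a x m m' : m <= m' -> le (f a x m') (f a x m).
Proof.
move=> /subnK <-; elim: (m' - m) => [|d IH]; first exact: le_refl_abs.
by rewrite addSn; apply: le_trans (f_mono _ _ _) IH.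
Qed.

Definition state := A -> {set X}.
Definition load (s : state) x := #|[set a | x \in s a]|.
Definition NE (k : A -> nat) (s : state) := forall a, s a \subset E a /\ #|s a| = k a /\
  forall x y, x \in s a -> y \in E a -> y \notin s a -> le (f a y (load s y).+1) (f a x (load s x)).
Definition cov (s : state) := #|[set x | P x & 0 < load s x]|.

Lemma covE (s : state) (b : X -> nat) r : (forall x, load s x = b x + (x == r)) ->
  cov s = #|[set x | P x & 0 < b x]| + (P r && (b r == 0)).
Proof.
move=> Hl; rewrite /cov (cardsD1 r) [X in _ = X + _](cardsD1 r) !inE Hl eqxx addn1 /=.
have -> : [set x | P x & 0 < load s x] :\ r = [set x | P x & 0 < b x] :\ r.
  by apply/setP => z; rewrite !inE Hl; case: eqP => //= _; rewrite addn0.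
by case: (P r); case: (b r) => [|m] /=; lia.
Qed.

Lemma load_upd (s : state) a (S : {set X}) x :
  load (fun a' => if a' == a then S else s a') x + (x \in s a) = load s x + (x \in S).
Proof.
rewrite /load (cardsD1 a) [X in _ = X + _](cardsD1 a) !inE eqxx.
have -> : [set a' | x \in (if a' == a then S else s a')] :\ a = [set a' | x \in s a'] :\ a.
  by apply/setP => z; rewrite !inE; case: eqP.
case: (x \in s a); case: (x \in S) => /=; lia.
Qed.

Section Phase.
Variables (k : A -> nat) (b : X -> nat).
Definition bh (s : state) := forall a x y, x \in s a -> y \in E a -> y \notin s a ->
  le (f a y (b y).+1) (f a x (b x)).
Definition robust (S : {set X}) a x := [forall y in E a :\: S, le (f a y (b y).+1) (f a x (b x).+1)].
Definition nr (s : state) := \sum_a #|[set x in s a | ~~ robust (s a) a x]|.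
Definition Inv (s : state) rho := (forall a, s a \subset E a /\ #|s a| = k a) /\
  (forall x, load s x = b x + (x == rho)) /\ bh s.

Lemma final s rho : Inv s rho -> ~~ [exists a, (rho \in s a) && ~~ robust (s a) a rho] -> NE k s.
Proof.
move=> [Hk [Hl Hb]] /existsPn Hno a; have [sE ka] := Hk a; split => //; split => // x y xs yE ys.
have h1 : le (f a y (load s y).+1) (f a y (b y).+1) by apply: f_anti; rewrite Hl ltnS leq_addr.
apply: le_trans h1 _.
case: (eqVneq x rho) => [xr|xr].
  move: (Hno a); rewrite -xr xs /= negbK => /forallP /(_ y); rewrite !inE yE ys /= => H.
  by rewrite Hl xr eqxx addn1 -xr.
by rewrite Hl (negPf xr) addn0; apply: Hb.
Qed.

Lemma phase n : forall s rho, nr s <= n -> Inv s rho -> exists s', NE k s' /\ cov s <= cov s'.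
Proof.
elim: n => [|n IH] s rho Hn HI; case: (boolP [exists a, (rho \in s a) && ~~ robust (s a) a rho]) => [/existsP [a /andP [ra nra]]|Hno]; last 1 first.
- by exists s; split => //; apply: final HI Hno.
- exfalso; move: Hn; rewrite leqn0 /nr (bigD1 a) //= addn_eq0 => /andP [/eqP H _].
  by move: H => /eqP; rewrite cards_eq0 => /eqP /setP /(_ rho); rewrite !inE ra nra.
- by exists s; split => //; apply: final HI Hno.
move: HI => [Hk [Hl Hb]].
have [sE ka] := Hk a.
set F := fun y => f a y (b y).+1.
have nra0 := nra; move: nra0 => /forallPn [y0]; rewrite negb_imply => /andP [y0in ny0].
have neS : E a :\: s a != set0 by apply/set0Pn; exists y0.
have [r' r'in Hmax] := set_max le_trans le_total F neS.
have lt1 : ~~ le (F r') (F rho).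
  apply: contra ny0 => H; exact: le_trans (Hmax _ y0in) H.
have le1 : le (F rho) (F r') by case/orP: (le_total (F rho) (F r')) => //; rewrite (negPf lt1).
move: r'in; rewrite inE => /andP [r'ns r'E].
have r'rho : r' != rho by apply: contraNneq r'ns => ->.
pose s' := fun a' => if a' == a then r' |: (s a :\ rho) else s a'.
have s'a : s' a = r' |: (s a :\ rho) by rewrite /s' eqxx.
have s'o : forall a', a' != a -> s' a' = s a' by move=> a' /negPf; rewrite /s' => ->.
have Hl' : forall x, load s' x = b x + (x == r').
  move=> x; have h1 := Hl x; have h2 := load_upd s a (r' |: (s a :\ rho)) x.
  rewrite -/s' in h2; move: h2; rewrite !inE; move: h1.
  move: (load s' x) (load s x) => L' L.
  case: (eqVneq x rho) => [->|xr].
    by rewrite ra eq_sym (negPf r'rho) /= => ->; rewrite !addn0 !addn1 => -[].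
  case: (eqVneq x r') => [->|xr'].
    by rewrite (negPf r'ns) /= => ->; rewrite !addn0.
  by rewrite /= !addn0 => -> /eqP; rewrite eqn_add2r => /eqP.
have Hrob : forall x, x \in s a -> x != rho -> robust (s a) a x -> robust (s' a) a x.
  move=> x xs xr /forallP Hx; apply/forallP => y; apply/implyP; rewrite s'a !inE negb_or negb_and negbK.
  move=> /andP [/andP [yr' yo] yE].
  case: (eqVneq y rho) => [->|yr]; last first.
    by move: yo; rewrite (negPf yr) /= => yns; move: (Hx y); rewrite !inE yns yE.
  apply: le_trans le1 _; by move: (Hx r'); rewrite !inE r'ns r'E.
have Hrr : robust (s' a) a r'.
  apply/forallP => y; apply/implyP; rewrite s'a !inE negb_or negb_and negbK.
  move=> /andP [/andP [yr' yo] yE].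
  case: (eqVneq y rho) => [->|yr] //.
  by move: yo; rewrite (negPf yr) /= => yns; apply: Hmax; rewrite !inE yns yE.
have Inv' : Inv s' r'.
  split; last split => //.
    move=> a'; case: (eqVneq a' a) => [->|ne]; last by rewrite s'o //; apply: Hk.
    rewrite s'a; split.
      by rewrite subUset sub1set r'E (subset_trans (subD1set _ _) sE).
    by rewrite cardsU1 !inE (negPf r'rho) /= (negPf r'ns) -ka (cardsD1 rho (s a)) ra.
  move=> a' x y; case: (eqVneq a' a) => [->|ne]; last by rewrite s'o //; apply: Hb.
  rewrite s'a !inE negb_or negb_and negbK => xin yE /andP [yr' yo].
  have HyF : le (F y) (F r').
    case: (eqVneq y rho) => [->|yr] //.
    by move: yo; rewrite (negPf yr) /= => yns; apply: Hmax; rewrite !inE yns yE.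
  case/orP: xin => [/eqP ->|/andP [xr xs]].
    exact: le_trans HyF (f_mono _ _ _).
  apply: le_trans HyF _.
  by apply: Hb => //; rewrite r'ns.
have Hnr : nr s' < nr s.
  rewrite /nr (bigD1 a) //= [X in _ < X](bigD1 a) //=.
  have -> : \sum_(i | i != a) #|[set x in s' i | ~~ robust (s' i) i x]| =
            \sum_(i | i != a) #|[set x in s i | ~~ robust (s i) i x]|.
    by apply: eq_bigr => a' ne; rewrite s'o.
  rewrite ltn_add2r (cardsD1 rho [set x in s a | _]) !inE ra nra add1n ltnS.
  apply: subset_leq_card; apply/subsetP => x; rewrite s'a !inE.
  case: (eqVneq x r') => [->|xr']; first by rewrite -s'a Hrr ?andbF.
  move=> /andP [/andP [xr xs] nrx]; rewrite xr xs.
  by move: nrx; rewrite -s'a; apply: contra; apply: Hrob.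
have [s'' [NE'' cov'']] := IH s' r' (leq_trans Hnr Hn) Inv'.
exists s''; split => //; apply: leq_trans cov''.
rewrite (covE Hl) (covE Hl') leq_add2l.
case/boolP: (P rho && (b rho == 0)) => // /andP [Pr /eqP br0].
have key : ~~ (~~ P r' || (1 < (b r').+1)).
  apply/negP => H; have H2 := f_solo a Pr H.
  move: lt1; rewrite /F br0 => lt1.
  by case/orP: (le_total (f a r' (b r').+1) (f a rho 1)); rewrite ?(negPf lt1) ?(negPf H2).
by move: key; rewrite negb_or negbK ltnS -eqn0Ngt => ->.
Qed.
End Phase.

Lemma NE_eq k k' s : (forall a, k a = k' a) -> NE k s -> NE k' s.
Proof. by move=> H Hs a; rewrite -H; apply: Hs. Qed.

Lemma add_unit k s a : NE k s -> k a < #|E a| ->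
  exists s', NE (fun a' => k a' + (a' == a)) s' /\ cov s <= cov s'.
Proof.
move=> Hs ka.
have [sE [ska Hne]] := Hs a.
have neS : E a :\: s a != set0.
  apply/negP => /eqP H; move: ka; rewrite -ska.
  have : E a \subset s a by rewrite -setD_eq0 H.
  by move/subset_leq_card; rewrite leqNgt => /negP.
set b := load s.
set F := fun y => f a y (b y).+1.
have [y yin Hmax] := set_max le_trans le_total F neS.
move: yin; rewrite inE => /andP [yns yE].
pose s1 := fun a' => if a' == a then y |: s a else s a'.
have s1a : s1 a = y |: s a by rewrite /s1 eqxx.
have s1o : forall a', a' != a -> s1 a' = s a' by move=> a' /negPf; rewrite /s1 => ->.
have Hl1 : forall x, load s1 x = b x + (x == y).
  move=> x; have h2 := load_upd s a (y |: s a) x.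
  rewrite -/s1 in h2; move: h2; rewrite !inE -/b.
  move: (load s1 x) (b x) => L' L.
  case: (eqVneq x y) => [->|xy]; first by rewrite (negPf yns) /= !addn0.
  by rewrite /= !addn0 => /eqP; rewrite eqn_add2r => /eqP.
have Inv1 : Inv (fun a' => k a' + (a' == a)) b s1 y.
  split; last split => //.
    move=> a'; case: (eqVneq a' a) => [->|ne]; last first.
      by rewrite s1o // addn0; have [? [? _]] := Hs a'.
    rewrite s1a; split; first by rewrite subUset sub1set yE sE.
    by rewrite cardsU1 yns ska addnC.
  move=> a' x z; case: (eqVneq a' a) => [->|ne]; last first.
    by rewrite s1o //; have [_ [_ H]] := Hs a'; apply: H.
  rewrite s1a !inE negb_or => xin zE /andP [zy zns].
  case/orP: xin => [/eqP ->|xs].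
    by apply: le_trans (f_mono _ _ _); apply: Hmax; rewrite !inE zns zE.
  by apply: Hne.
have [s' [H1 H2]] := phase (leqnn _) Inv1.
exists s'; split => //; apply: leq_trans H2.
by rewrite (covE Hl1) /cov leq_addr.
Qed.

Lemma abstract_main (k : A -> nat) : (forall a, k a <= #|E a|) ->
  forall k0 s0, NE k0 s0 -> (forall a, k0 a <= k a) -> exists s, NE k s /\ cov s0 <= cov s.
Proof.
move=> kE.
suff H : forall d k0 s0, \sum_a (k a - k0 a) <= d -> NE k0 s0 ->
    (forall a, k0 a <= k a) -> exists s, NE k s /\ cov s0 <= cov s.
  by move=> k0 s0; apply: H (leqnn _).
have Hnone : forall k0 s0, NE k0 s0 -> (forall a, k0 a <= k a) -> (forall a, ~~ (k0 a < k a)) ->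
    exists s, NE k s /\ cov s0 <= cov s.
  move=> k0 s0 Hs Hk0 none; exists s0; split => //; apply: NE_eq Hs => a.
  by apply/eqP; rewrite eqn_leq Hk0 leqNgt none.
elim=> [|d IH] k0 s0 Hd Hs Hk0.
  case: (boolP [exists a, k0 a < k a]) => [/existsP [a lt]| /existsPn none]; last exact: Hnone.
  by move: Hd; rewrite leqn0 (bigD1 a) //= addn_eq0 subn_eq0 leqNgt lt.
case: (boolP [exists a, k0 a < k a]) => [/existsP [a lt]| /existsPn none]; last exact: Hnone.
have [s1 [Hs1 cov1]] := add_unit Hs (leq_trans lt (kE a)).
have [s [Hs' cov']] : exists s, NE k s /\ cov s1 <= cov s; last first.
  by exists s; split => //; apply: leq_trans cov'.
apply: (IH _ s1 _ Hs1).
- move: Hd; rewrite (bigD1 a) //= [X in _ <= _ -> X <= _](bigD1 a) //=.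
  have -> : \sum_(i | i != a) (k i - (k0 i + (i == a))) = \sum_(i | i != a) (k i - k0 i).
    by apply: eq_bigr => i /negPf ->; rewrite addn0.
  move: (\sum_(i | i != a) (k i - k0 i)) => S; rewrite eqxx; move: lt; lia.
- move=> a'; case: (eqVneq a' a) => [->|ne]; first by rewrite addn1.
  by rewrite addn0.
Qed.
End Abstract.

Import Order.TTheory GRing.Theory Num.Theory.

Section Concrete.
Variables (R : realType) (n : nat) (Omega : finType) (G : search_game R n Omega).
Local Open Scope ring_scope.

Definition NN := (\max_(i < n) K G i)%N.
Definition Ag := ('I_n * {set Omega})%type.
Definition Xr := (Omega + 'I_NN)%type.
Definition isl (x : Xr) := if x is inl _ then true else false.
Definition Ec (a : Ag) : {set Xr} := if a.2 \in Pi G a.1 then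
  inl @: a.2 :|: [set inr j | j : 'I_NN & (j < K G a.1)%N] else set0.
Definition kc (a : Ag) := if a.2 \in Pi G a.1 then K G a.1 else 0%N.
Definition delta i (j : nat) : R := c G i j - c G i j.-1.
Definition fc (a : Ag) (x : Xr) (m : nat) : bool * R :=
  match x with inl w => ((m <= 1)%N, mu_cond G w a.2 * v G a.1 (maxn m 1) w)
  | inr j => (false, delta a.1 j.+1) end.
Definition lec (u w : bool * R) := if u.1 == w.1 then u.2 <= w.2 else w.1.

Lemma lec_trans u w z : lec u w -> lec w z -> lec u z.
Proof.
case: u w z => [b1 r1] [b2 r2] [b3 r3]; rewrite /lec /=.
case: b1; case: b2; case: b3 => //=; exact: le_trans.
Qed.

Lemma lec_total u w : lec u w || lec w u.
Proof.
case: u w => [b1 r1] [b2 r2]; rewrite /lec /=.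
case: b1; case: b2 => //=; exact: le_total.
Qed.

Lemma mu_set_ge0 C : 0 <= mu_set G C.
Proof. by apply: sumr_ge0 => w _; apply: mu_ge0. Qed.

Lemma mu_cond_ge0 w C : 0 <= mu_cond G w C.
Proof. by apply: divr_ge0; [apply: mu_ge0 | apply: mu_set_ge0]. Qed.

Lemma fc_mono a x m : lec (fc a x m.+1) (fc a x m).
Proof.
case: x => [w|j]; rewrite /lec /=; last by rewrite lexx.
have Hv : v G a.1 (maxn m.+1 1) w <= v G a.1 (maxn m 1) w.
  case: m => [|m]; first by rewrite lexx.
  rewrite !maxnE /= !addn0; exact: v_decr.
case: m Hv => [|[|m]] Hv //=.
by rewrite ler_wpM2l // mu_cond_ge0.
Qed.

Lemma fc_solo a x y m : isl x -> ~~ isl y || (1 < m)%N -> ~~ lec (fc a x 1) (fc a y m).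
Proof.
case: x => [w|//] _; rewrite /lec /=.
case: y => [w'|j] /=; last by [].
by case: m => [|[|m]].
Qed.

Lemma kcE a : (kc a <= #|Ec a|)%N.
Proof.
rewrite /kc /Ec; case: ifP => // _.
apply: leq_trans (subset_leq_card (subsetUr _ _)).
rewrite card_imset; last by move=> ? ? [].
have HK : (K G a.1 <= NN)%N by apply: (@leq_bigmax _ (fun i => K G i)).
have -> : [set j : 'I_NN | (j < K G a.1)%N] = [set widen_ord HK j | j : 'I_(K G a.1)].
  apply/setP => j; rewrite !inE; apply/idP/imsetP => [jl|[j' _ ->]]; last exact: (ltn_ord j').
  by exists (Ordinal jl) => //; apply: val_inj.
rewrite card_imset ?card_ord //.
by move=> j1 j2 /(congr1 val) /= /val_inj.
Qed.


Lemma sumb_card (T : finType) (b : pred T) : (\sum_i (b i : nat))%N = #|[set i | b i]|.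
Proof.
rewrite -sum1_card [RHS]big_mkcond /=; apply: eq_bigr => i _; rewrite inE; by case: (b i).
Qed.

Lemma trivP i : trivIset (Pi G i).
Proof. by have /and3P [_ ? _] := Pi_partition G i. Qed.

Lemma cover_Pi i : cover (Pi G i) = setT.
Proof. by have /and3P [/eqP ? _ _] := Pi_partition G i. Qed.

Lemma cell_mem i w : cell G i w \in Pi G i.
Proof. by rewrite /cell pblock_mem // cover_Pi inE. Qed.

Lemma mem_cell i w : w \in cell G i w.
Proof. by rewrite /cell mem_pblock cover_Pi inE. Qed.

Lemma cellE i C w : C \in Pi G i -> w \in C -> cell G i w = C.
Proof. by move=> CP wC; rewrite /cell (def_pblock (trivP i) CP wC). Qed.

Lemma Ec_inl a w : (inl w \in Ec a) = (a.2 \in Pi G a.1) && (w \in a.2).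
Proof.
rewrite /Ec; case: ifP => _; last by rewrite inE.
rewrite !inE; apply/orP/idP => [[/imsetP [w' ? [->]] //|/imsetP [? _ //]]|?].
by left; apply/imsetP; exists w.
Qed.

Lemma Ec_inr a j : (inr j \in Ec a) = (a.2 \in Pi G a.1) && (j < K G a.1)%N.
Proof.
rewrite /Ec; case: ifP => _; last by rewrite inE.
rewrite !inE; apply/orP/idP => [[/imsetP [? ? //]|/imsetP [j' jin [->]]]|jl].
  by move: jin; rewrite inE.
by right; apply/imsetP; exists j => //; rewrite inE.
Qed.

Definition prof (s : Ag -> {set Xr}) : profile n Omega := fun i C => [set w | inl w \in s (i, C)].

Lemma msearch_prof (s : Ag -> {set Xr}) : (forall a, s a \subset Ec a) ->
  forall w, msearch G (prof s) w = load s (inl w).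
Proof.
move=> sE w; rewrite /msearch /searches /load /prof.
rewrite (eq_bigr (fun j => nat_of_bool (inl w \in s (j, cell G j w)))); last by move=> j _; rewrite inE.
rewrite (sumb_card (fun j => inl w \in s (j, cell G j w))).
have -> : [set a | inl w \in s a] = [set (j, cell G j w) | j in [set j | inl w \in s (j, cell G j w)]].
  apply/setP => [[i C]]; rewrite inE; apply/idP/imsetP => [H|[j]]; last first.
    by rewrite inE => H [-> ->].
  exists i; rewrite ?inE //.
  have := subsetP (sE (i, C)) _ H; rewrite Ec_inl /= => /andP [CP wC].
  by rewrite (cellE CP wC).
  by have := subsetP (sE (i, C)) _ H; rewrite Ec_inl /= => /andP [CP wC]; rewrite (cellE CP wC).
by rewrite card_imset // => j1 j2 [].
Qed.

Definition ST := {ffun Ag -> {set Xr}}.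
Definition fs (s : ST) : state Ag Xr := fun a => s a.
Definition ERc a := [set x in Ec a | isl x].
Definition disj (s : ST) := [forall a, (s a \subset ERc a) && (#|s a| <= kc a)%N] &&
  [forall x, (load (fs s) x <= 1)%N].
Definition gW (s : ST) : R := \sum_a \sum_(x in s a) (fc a x 1).2.

Lemma load_ext (s1 s2 : state Ag Xr) x : (forall a, s1 a = s2 a) -> load s1 x = load s2 x.
Proof. by move=> H; rewrite /load; apply: eq_card => a; rewrite !inE H. Qed.

Lemma sigma0_ex : exists s0 : ST, disj s0 /\ (forall s, disj s -> (cov isl (fs s) <= cov isl (fs s0))%N) /\
  forall a, forall x y, x \in s0 a -> y \in Ec a -> y \notin s0 a ->
     lec (fc a y (load (fs s0) y).+1) (fc a x (load (fs s0) x)).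
Proof.
have ne1 : [set s : ST | disj s] != set0.
  apply/set0Pn; exists [ffun => set0]; rewrite inE; apply/andP; split.
    by apply/forallP => a; rewrite ffunE sub0set cards0.
  apply/forallP => x; rewrite /load /fs.
  by rewrite (_ : [set a | x \in _] = set0) ?cards0 //; apply/setP => a; rewrite !inE ffunE inE.
have [sm smD Hsm] := set_max (le := leq) (fun u v w => @leq_trans v u w) leq_total (fun s => cov isl (fs s)) ne1.
set M := cov isl (fs sm).
have ne2 : [set s : ST | disj s && (cov isl (fs s) == M)] != set0.
  by apply/set0Pn; exists sm; rewrite inE eqxx andbT; rewrite inE in smD.
have [s0 s0D Hs0] := set_max (le := fun x y : R => x <= y) (fun u v w => @le_trans _ R v u w) (@le_total _ R) gW ne2.
move: s0D; rewrite inE => /andP [s0D /eqP s0M].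
exists s0; split => //; split.
  by move=> s sD; rewrite s0M; apply: Hsm; rewrite inE.
move: (s0D) => /andP [/forallP Hsub /forallP Hl1].
move=> a x y xs yE ys.
have [xR _] := andP (Hsub a); have := subsetP xR _ xs; rewrite inE => /andP [xE].
case: x xs xE => [w|//] xs xE _.
have lx : load (fs s0) (inl w) = 1%N.
  apply/eqP; rewrite eqn_leq Hl1 /= card_gt0; apply/set0Pn; exists a; by rewrite inE.
rewrite lx.
case: y yE ys => [w'|j] yE ys; last by rewrite /lec /=.
case: (posnP (load (fs s0) (inl w'))) => ly; last by rewrite /lec /= ltnS leqNgt ly.
rewrite ly /lec /=.
pose s' : ST := [ffun a' => if a' == a then inl w' |: (s0 a :\ inl w) else s0 a'].
have s'a : s' a = inl w' |: (s0 a :\ inl w) by rewrite ffunE eqxx.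
have s'o : forall a', a' != a -> s' a' = s0 a' by move=> a' /negPf H; rewrite ffunE H.
have yx : inl w' != inl w :> Xr by apply: contraNneq ys => ->.
have Hld : forall z, (load (fs s') z + (z \in s0 a) = load (fs s0) z + (z \in inl w' |: (s0 a :\ inl w)))%N.
  move=> z; rewrite -(load_upd (fs s0) a (inl w' |: (s0 a :\ inl w)) z); congr (_ + _)%N.
  by apply: load_ext => a'; rewrite /fs ffunE.
pose b z := (load (fs s0) z - (z == inl w))%N.
have Hb0 : forall z, load (fs s0) z = (b z + (z == inl w))%N.
  move=> z; rewrite /b; case: eqP => [->|_]; first by rewrite lx.
  by rewrite subn0 addn0.
have Hb1 : forall z, load (fs s') z = (b z + (z == inl w'))%N.
  move=> z; have := Hld z; rewrite Hb0 !inE.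
  move: (load (fs s') z) (b z) => L B.
  case: (eqVneq z (inl w)) => [->|zx]; first by rewrite xs eq_sym (negPf yx) /= => /eqP; rewrite !addn0 !addn1 eqSS => /eqP.
  case: (eqVneq z (inl w')) => [->|zy]; first by rewrite (negPf ys) /= !addn0.
  by rewrite /= !addn0 => /eqP; rewrite eqn_add2r => /eqP.
have s'D : disj s'.
  apply/andP; split; apply/forallP.
    move=> a'; case: (eqVneq a' a) => [->|ne]; last by rewrite s'o //; apply: Hsub.
    rewrite s'a; have /andP [sR sk] := Hsub a; apply/andP; split.
      rewrite subUset sub1set !inE yE /=; exact: subset_trans (subD1set _ _) sR.
    have ynot : inl w' \notin s0 a :\ inl w by rewrite !inE negb_and ys orbT.
    by rewrite cardsU1 ynot add1n; move: sk; rewrite (cardsD1 (inl w) (s0 a)) xs add1n.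
  move=> z; rewrite Hb1; case: (eqVneq z (inl w')) => [->|zy]; first by rewrite /b ly.
  by rewrite addn0 /b; apply: leq_trans (leq_subr _ _) (Hl1 z).
have covs' : cov isl (fs s') = cov isl (fs s0).
  rewrite (covE isl Hb1) (covE isl Hb0) /b ly lx (negPf yx) eqxx //.
have Hg := Hs0 s'; rewrite inE s'D covs' s0M eqxx /= in Hg.
have {}Hg := Hg isT.
move: Hg; rewrite /gW (bigD1 a) //= [X in _ <= X -> _](bigD1 a) //=.
have -> : \sum_(i | i != a) \sum_(x in s' i) (fc i x 1).2 = \sum_(i | i != a) \sum_(x in s0 i) (fc i x 1).2.
  by apply: eq_bigr => a' ne; rewrite s'o.
rewrite lerD2r s'a big_setU1 /=; last by rewrite !inE negb_and ys orbT.
rewrite [X in _ <= X -> _](big_setD1 (inl w)) //= lerD2r.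
by rewrite /maxn.
Qed.

Lemma inl_inj : injective (@inl Omega 'I_NN). Proof. by move=> ? ? []. Qed.

Lemma inr_inj : injective (@inr Omega 'I_NN). Proof. by move=> ? ? []. Qed.

Lemma cov_real (s : state Ag Xr) : cov isl s = #|[set w | (0 < load s (inl w))%N]|.
Proof.
rewrite /cov -(card_imset _ inl_inj); apply: eq_card => x; rewrite !inE.
case: x => [w|j] /=.
  by rewrite (mem_imset _ _ inl_inj) inE.
by apply/esym/negbTE/imsetP => -[? _].
Qed.

Lemma nsearched_prof (s : state Ag Xr) : (forall a, s a \subset Ec a) ->
  nsearched G (prof s) = cov isl s.
Proof.
move=> sE; rewrite cov_real /nsearched; apply: eq_card => w; rewrite !inE.
by rewrite msearch_prof.
Qed.

Lemma msearch_pos (s : profile n Omega) w :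
  (0 < msearch G s w)%N = [exists j, w \in s j (cell G j w)].
Proof.
rewrite /msearch /searches (sumb_card (fun j => w \in s j (cell G j w))) card_gt0.
apply/set0Pn/existsP => -[j]; rewrite ?inE => H; by exists j; rewrite ?inE.
Qed.

Lemma profile_bound (s' : profile n Omega) : is_profile G s' ->
  exists sg : ST, disj sg /\ cov isl (fs sg) = nsearched G s'.
Proof.
move=> Hs'.
pose owner w := [pick j | w \in s' j (cell G j w)].
pose sg : ST := [ffun a : Ag => inl @: [set w in s' a.1 a.2 | (a.2 \in Pi G a.1) && (owner w == Some a.1)]].
have memsg : forall a w, (inl w \in sg a) = [&& w \in s' a.1 a.2, a.2 \in Pi G a.1 & owner w == Some a.1].
  by move=> a w; rewrite ffunE (mem_imset _ _ inl_inj) !inE.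
have memsgr : forall a j, (inr j \in sg a) = false.
  by move=> a j; rewrite ffunE; apply/negbTE/imsetP => -[? _].
have sgE : forall a, sg a \subset Ec a.
  move=> a; apply/subsetP => -[w|j]; rewrite ?memsgr // memsg => /and3P [ws CP _].
  have [sub _] := Hs' a.1 a.2 CP.
  by rewrite Ec_inl CP (subsetP sub _ ws).
exists sg; split.
  apply/andP; split; apply/forallP.
    move=> a; apply/andP; split.
      apply/subsetP => x xs; rewrite inE (subsetP (sgE a) _ xs).
      by case: x xs => [//|j]; rewrite memsgr.
    rewrite ffunE card_imset; last exact: inl_inj.
    rewrite /kc; case: ifP => CP.
      have [_ kK] := Hs' a.1 a.2 CP.
      apply: leq_trans kK; apply: subset_leq_card; apply/subsetP => w; rewrite inE => /andP [].
      by [].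
    by rewrite leqn0 cards_eq0; apply/eqP/setP => w; rewrite !inE /= andbF.
  move=> x; rewrite /load /fs.
  case: x => [w|j]; last first.
    by rewrite (_ : [set a | inr j \in sg a] = set0) ?cards0 //; apply/setP => a; rewrite !inE memsgr.
  case Ho: (owner w) => [j0|].
    apply: leq_trans (subset_leq_card (_ : _ \subset [set (j0, cell G j0 w)])) _; last by rewrite cards1.
    apply/subsetP => -[i C]; rewrite !inE memsg /= Ho => /and3P [ws CP /eqP [Hi]]; subst j0.
    have [sub _] := Hs' i C CP.
    by rewrite (cellE CP (subsetP sub _ ws)).
  rewrite (_ : [set a | inl w \in sg a] = set0) ?cards0 //; apply/setP => a; rewrite !inE memsg Ho; by apply/and3P => -[_ _ /eqP].
rewrite cov_real /nsearched; apply: eq_card => w; rewrite !inE msearch_pos card_gt0.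
case Ho: (owner w) => [j0|].
- have Hj0 : w \in s' j0 (cell G j0 w).
    by move: Ho; rewrite /owner; case: pickP => [j1 H [<-] //|].
  have -> : [exists j, w \in s' j (cell G j w)] by apply/existsP; exists j0.
  by apply/set0Pn; exists (j0, cell G j0 w); rewrite inE memsg /= Hj0 cell_mem Ho eqxx.
- have -> : [exists j, w \in s' j (cell G j w)] = false.
    apply/negbTE/existsPn => j; move: Ho; rewrite /owner; case: pickP => [//|H _].
    by rewrite H.
  apply/negbTE; rewrite negbK; apply/eqP/setP => a; rewrite !inE memsg Ho.
  by apply/and3P => -[_ _ /eqP].
Qed.

Lemma swap_sum (U : finType) (E S Z : {set U}) (g : U -> R) :
  Z \subset E -> #|Z| = #|S| ->
  (forall x y, x \in S -> y \in E -> y \notin S -> g y <= g x) ->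
  \sum_(z in Z) g z <= \sum_(z in S) g z.
Proof.
move=> ZE ZS Hg.
rewrite (big_setID S) [X in _ <= X](big_setID Z) setIC lerD2l.
have Hc : #|Z :\: S| = #|S :\: Z|.
  by move: ZS; rewrite -(cardsID S Z) -(cardsID Z S) setIC => /eqP; rewrite eqn_add2l => /eqP.
case: (eqVneq (S :\: Z) set0) => [e|ne].
  move: Hc; rewrite e cards0 => /eqP; rewrite cards_eq0 => /eqP ->.
  by rewrite !big_set0.
have [x0 x0in Hx0] := set_max (le := fun x y : R => y <= x) (fun u v w h1 h2 => le_trans h2 h1)
  (fun u v => le_total v u) g ne.
apply: (@le_trans _ _ (\sum_(z in Z :\: S) g x0)).
  apply: ler_sum => y; rewrite inE => /andP [yS yZ].
  move: x0in; rewrite inE => /andP [_ x0S].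
  by apply: Hg => //; apply: (subsetP ZE).
rewrite sumr_const Hc -sumr_const; apply: ler_sum => x xin; exact: Hx0.
Qed.

Lemma v_anti i w m m' : (0 < m)%N -> (m <= m')%N -> v G i m' w <= v G i m w.
Proof.
move=> m0 /subnK <-; elim: (m' - m)%N => [|d IH]; first by rewrite add0n.
rewrite addSn; apply: le_trans IH; apply: v_decr; rewrite addn_gt0 m0 orbT //.
Qed.

Lemma delta_mono i p q : (0 < p)%N -> (p <= q)%N -> (q <= K G i)%N -> delta i p <= delta i q.
Proof.
move=> p0 /subnK <-; elim: (q - p)%N => [|d IH]; first by rewrite add0n.
rewrite addSn => HK; apply: le_trans (IH (ltnW HK)) _.
rewrite /delta /=.
have dp0 : (0 < d + p)%N by rewrite addn_gt0 p0 orbT.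
by have := @c_convex _ _ _ G i (d + p)%N dp0 HK.
Qed.

Definition Stop i t : {set 'I_NN} := [set j : 'I_NN | (t <= j < K G i)%N].

Lemma Stop_prop i t : (t <= K G i)%N ->
  #|Stop i t| = (K G i - t)%N /\ \sum_(j in Stop i t) delta i j.+1 = c G i (K G i) - c G i t.
Proof.
move=> tK; have HK : (K G i <= NN)%N by apply: (@leq_bigmax _ (fun i => K G i)).
suff H : forall d u, (u + d = K G i)%N -> #|Stop i u| = d /\
    \sum_(j in Stop i u) delta i j.+1 = c G i (u + d) - c G i u.
  by have := H (K G i - t)%N t (subnKC tK); rewrite subnKC.
clear t tK.
elim=> [|d IH] t Htd.
  rewrite addn0 in Htd; subst t; have -> : Stop i (K G i) = set0.
    by apply/setP => j; rewrite !inE; case: leqP => //= H; rewrite ltnNge H.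
  by rewrite cards0 big_set0 addn0 subrr.
have tN : (t < NN)%N by apply: leq_trans HK; rewrite -Htd addnS ltnS leq_addr.
have [IH1 IH2] := IH t.+1 (etrans (addSnnS t d) Htd).
have tnot : Ordinal tN \notin Stop i t.+1 by rewrite inE /= ltnn.
have -> : Stop i t = Ordinal tN |: Stop i t.+1.
  apply/setP => j; rewrite !inE -val_eqE /=.
  case: (ltngtP j t) => [jt|tj|->] /=.
  - by [].
  - by [].
  - by rewrite -Htd addnS ltnS leq_addr.
rewrite cardsU1 tnot IH1 big_setU1 //= IH2 addSnnS /delta /=.
by split => //; rewrite addSnnS addrC addrA subrK.
Qed.

Lemma dummy_bound i (D : {set 'I_NN}) t : (t <= K G i)%N ->
  D \subset [set j : 'I_NN | (j < K G i)%N] -> #|D| = (K G i - t)%N ->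
  \sum_(j in D) delta i j.+1 <= c G i (K G i) - c G i t.
Proof.
move=> tK DE Dc; have [Sc Ss] := Stop_prop tK.
rewrite -Ss; apply: swap_sum DE _ _; first by rewrite Dc Sc.
move=> x y; rewrite !inE => /andP [tx xK] yK.
rewrite yK andbT -ltnNge => yt.
apply: delta_mono => //.
by rewrite ltnS; apply: ltnW (leq_trans yt tx).
Qed.

Hypothesis hS : solitary_search_dominant G.

Lemma lex_real a x y m m' : x \in Ec a -> y \in Ec a ->
  lec (fc a y m') (fc a x m) -> (fc a y m').2 <= (fc a x m).2.
Proof.
rewrite /lec; case: eqP => // Hne xE yE.
case: x xE Hne => [w|j] xE Hne; last by case: y yE Hne => [w'|j'].
rewrite Ec_inl in xE; move: xE => /andP [CP wC] /= m1.
have -> : maxn m 1 = 1%N by apply/maxn_idPr.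
have [H1 H2] := hS CP wC wC.
case: y yE Hne => [w'|j] yE Hne /=.
  rewrite Ec_inl in yE; move: yE => /andP [_ w'C].
  have [H3 _] := hS CP wC w'C.
  apply: le_trans H3; apply: ler_wpM2l; first exact: mu_cond_ge0.
  have m'1 : (1 < m')%N by rewrite ltnNge; apply/negP => H; apply: Hne; rewrite /= H m1.
  rewrite (maxn_idPl (ltnW m'1)); exact: v_anti.
rewrite Ec_inr in yE; move: yE => /andP [_ jK].
apply: le_trans H2; rewrite -/(delta a.1 (K G a.1)).
by apply: delta_mono.
Qed.

Lemma sum_split (Y : {set Xr}) (g : Xr -> R) :
  \sum_(x in Y) g x = \sum_(w in [set w | inl w \in Y]) g (inl w) + \sum_(j in [set j | inr j \in Y]) g (inr j).
Proof.
rewrite big_sumType; congr (_ + _); apply: eq_bigl => z; by rewrite inE.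
Qed.

Lemma card_split (Y : {set Xr}) :
  #|Y| = (#|[set w | inl w \in Y]| + #|[set j | inr j \in Y]|)%N.
Proof.
rewrite -!sum1_card big_sumType; congr (_ + _)%N; apply: eq_bigl => z; by rewrite inE.
Qed.

Lemma payoff_cells (p : profile n Omega) i : payoff G i p =
  \sum_(C in Pi G i) \sum_(w in C)
    mu G w * ((w \in p i C)%:R * v G i (msearch G p w) w - c G i #|p i C|).
Proof.
rewrite /payoff.
pose F w := mu G w * ((searches G p i w)%:R * v G i (msearch G p w) w - c G i #|p i (cell G i w)|).
transitivity (\sum_(C in Pi G i) \sum_(w in C) F w); last first.
  by apply: eq_bigr => C CP; apply: eq_bigr => w wC; rewrite /F /searches (cellE CP wC).
rewrite -big_trivIset; last exact: trivP.
by rewrite cover_Pi; apply: eq_bigl => w; rewrite inE.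
Qed.

Lemma percell i C (P : {set Omega}) (M o : Omega -> nat) : C \in Pi G i -> P \subset C ->
  (forall w, w \in P -> M w = (o w).+1) ->
  \sum_(w in C) mu G w * ((w \in P)%:R * v G i (M w) w - c G i #|P|) =
  mu_set G C * (\sum_(w in P) mu_cond G w C * v G i (o w).+1 w - c G i #|P|).
Proof.
move=> CP PC HM.
have mC : mu_set G C != 0 by rewrite gt_eqF // (mu_cell_gt0 CP).
rewrite mulrBr mulr_sumr.
under eq_bigr do rewrite mulrBr.
rewrite big_split /= sumrN; congr (_ - _).
  rewrite (big_setID P) /= (setIidPr PC).
  rewrite [X in _ + X]big1 ?addr0; last by move=> w; rewrite inE => /andP [/negPf -> _]; rewrite mul0r mulr0.
  apply: eq_bigr => w wP; rewrite wP HM // mul1r /mu_cond.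
  by rewrite mulrA [mu_set G C * _]mulrC divfK.
by rewrite /mu_set mulr_suml.
Qed.


Lemma ne_trans (sg : state Ag Xr) : NE lec Ec fc kc sg -> pure_nash G (prof sg).
Proof.
move=> Hne.
have sE : forall a, sg a \subset Ec a by move=> a; have [H _] := Hne a.
have ska : forall a, #|sg a| = kc a by move=> a; have [_ [H _]] := Hne a.
set s := prof sg.
have Hsub : forall i C, C \in Pi G i -> s i C \subset C.
  move=> i C CP; apply/subsetP => w; rewrite inE => H.
  by have := subsetP (sE (i, C)) _ H; rewrite Ec_inl => /andP [_].
have HcardS : forall i C, C \in Pi G i -> (#|s i C| + #|[set j | inr j \in sg (i, C)]|)%N = K G i.
  by move=> i C CP; have := ska (i, C); rewrite card_split /kc /= CP.
have Hprof : is_profile G s.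
  move=> i C CP; split; first exact: Hsub.
  by rewrite -(HcardS i C CP) leq_addr.
split => // i t Ht.
rewrite !payoff_cells; apply: ler_sum => C CP.
have [tC tK] := Ht C CP.
set S := s i C; set T := t C.
pose o w := (\sum_(j | j != i) searches G s j w)%N.
have Hms : forall w, w \in C -> msearch G s w = ((w \in S) + o w)%N.
  by move=> w wC; rewrite /msearch (bigD1 i) //= /searches (cellE CP wC).
have Hmd : forall w, w \in C -> msearch G (deviate s i t) w = ((w \in T) + o w)%N.
  move=> w wC; rewrite /msearch (bigD1 i) //= /searches /deviate eqxx (cellE CP wC).
  congr (_ + _)%N; apply: eq_bigr => j /negPf ->; by [].
have -> : deviate s i t i = t by rewrite /deviate eqxx.
rewrite -/T (@percell i C T _ o CP tC); last first.
  by move=> w wT; rewrite Hmd ?(subsetP tC _ wT) // wT.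
rewrite (@percell i C S _ o CP (Hsub i C CP)); last first.
  by move=> w wS; rewrite Hms ?(subsetP (Hsub i C CP) _ wS) // wS.
apply: ler_wpM2l; first exact: mu_set_ge0.
pose a : Ag := (i, C).
pose g z := (fc a z (load sg z - (z \in sg a)).+1).2.
pose h w := mu_cond G w C * v G i (o w).+1 w.
have KN : (K G i <= NN)%N by apply: (@leq_bigmax _ (fun i => K G i)).
have ginl : forall w, w \in C -> g (inl w) = h w.
  move=> w wC; rewrite /g /h /= -(msearch_prof sE) Hms // (_ : (inl w \in sg a) = (w \in S)); last by rewrite inE.
  by rewrite addKn (maxn_idPl _).
have Hg : forall x y, x \in sg a -> y \in Ec a -> y \notin sg a -> g y <= g x.
  move=> x y xs yE ys; have [_ [_ H]] := Hne a; have := H x y xs yE ys.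
  rewrite /g (negPf ys) xs subn0 subn1 prednK; last first.
    by rewrite card_gt0; apply/set0Pn; exists a; rewrite inE.
  by apply: lex_real => //; apply: (subsetP (sE a)).
pose Z := inl @: T :|: inr @: Stop i #|T|.
have ZT : [set w | inl w \in Z] = T.
  apply/setP => w; rewrite !inE (mem_imset _ _ inl_inj).
  have nI : inl w \notin inr @: Stop i #|T| by apply/imsetP => -[].
  by rewrite (negPf nI) orbF.
have ZS : [set j | inr j \in Z] = Stop i #|T|.
  apply/setP => j; rewrite !inE (mem_imset _ _ inr_inj).
  have nI : inr j \notin inl @: T by apply/imsetP => -[].
  by rewrite (negPf nI) inE.
have [Stc Sts] := Stop_prop tK.
have ZE : Z \subset Ec a.
  apply/subsetP => x; rewrite !inE => /orP [/imsetP [w wT ->]|/imsetP [j jS ->]].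
    by rewrite Ec_inl /= CP (subsetP tC _ wT).
  by rewrite Ec_inr /= CP; move: jS; rewrite inE => /andP [_ ->].
have Zc : #|Z| = #|sg a|.
  by rewrite (card_split Z) ZT ZS Stc ska /kc /= CP subnKC.
have Hsw := swap_sum ZE Zc Hg.
rewrite !sum_split ZT ZS in Hsw.
have e1 : \sum_(w in T) g (inl w) = \sum_(w in T) h w.
  by apply: eq_bigr => w wT; apply: ginl; apply: (subsetP tC).
have e2 : \sum_(j in Stop i #|T|) g (inr j) = c G i (K G i) - c G i #|T| by rewrite -Sts.
have e4 : \sum_(w in [set w | inl w \in sg a]) g (inl w) = \sum_(w in S) h w.
  by apply: eq_bigr => w wS; apply: ginl; apply: (subsetP (Hsub i C CP)).
have SK : (#|S| <= K G i)%N by rewrite -(HcardS i C CP) leq_addr.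
have e5 : \sum_(j in [set j | inr j \in sg a]) g (inr j) <= c G i (K G i) - c G i #|S|.
  apply: dummy_bound => //.
    apply/subsetP => j; rewrite !inE => H.
    by have := subsetP (sE a) _ H; rewrite Ec_inr => /andP [_].
  by rewrite -(HcardS i C CP) addKn.
rewrite e1 e2 e4 in Hsw.
lra.
Qed.


End Concrete.

Theorem corollary2 (R : realType) (n : nat) (Omega : finType)
  (G : search_game R n Omega) :
  solitary_search_dominant G ->
  exists s : profile n Omega, pure_nash G s /\ location_maximizing G s.
Proof.
move=> hS.
have [s0 [s0D [s0max s0NE]]] := sigma0_ex G.
move: (s0D) => /andP [/forallP Hsub _].
have NE0 : NE (@lec R) (@Ec _ _ _ G) (@fc _ _ _ G) (fun a => #|s0 a|) (fs s0).
  move=> a; split; last by split => //; exact: s0NE.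
  have /andP [H _] := Hsub a; apply: subset_trans H _.
  by apply/subsetP => x; rewrite inE => /andP [].
have Hk0 : forall a, (#|s0 a| <= @kc _ _ _ G a)%N by move=> a; have /andP [_ H] := Hsub a.
have [sg [Hsg covs]] := abstract_main (@lec_trans R) (@lec_total R) (@fc_mono _ _ _ G)
  (@fc_solo _ _ _ G) (@kcE _ _ _ G) NE0 Hk0.
have Hne := ne_trans hS Hsg.
exists (prof sg); split => //; split; first by case: Hne.
move=> s' Hs'; have [sg' [sg'D e]] := profile_bound Hs'.
rewrite -e nsearched_prof; last by move=> a; have [H _] := Hsg a.
exact: leq_trans (s0max _ sg'D) covs.
Qed.
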